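(* Let $m,n$ be positive integers and let $B=(B(i_1,\dots,i_{2m}))_{1\le i_1,\dots,i_{2m}\le 2n}$ change sign when $i_{2s-1}$ and $i_{2s}$ are interchanged, for each $1\le s\le m$. Let $M=(M(i_1,\dots,i_{2m}))_{1\le i_1,\dots,i_{2m}\le 2mn}$ be the fully antisymmetric array (i.e. $M(i_{\tau(1)},\dots,i_{\tau(2m)})=\mathrm{sgn}(\tau)M(i_1,\dots,i_{2m})$ for all $\tau\in\mathfrak{S}_{2m}$) determined by the following values for $i_1<\cdots<i_{2m}$: if there exist $1\le r_1,\dots,r_{2m}\le 2n$ with $i_{2s-1}=2n(s-1)+r_{2s-1}$ and $i_{2s}=2n(s-1)+r_{2s}$ for all $1\le s\le m$, then $M(i_1,\dots,i_{2m})=B(r_1,\dots,r_{2m})$; otherwise $M(i_1,\dots,i_{2m})=0$. Then $\mathrm{Pf}^{[2m]}(B)=\mathrm{BPf}^{[2m]}(M)$.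
   Context: With $\mathfrak{E}_{2n}=\{\sigma\in\mathfrak{S}_{2n}:\sigma(2i-1)<\sigma(2i),\ 1\le i\le n\}$, $\mathrm{Pf}^{[2m]}(B):=\frac{1}{n!}\sum_{\sigma_1,\dots,\sigma_m\in\mathfrak{E}_{2n}}\prod_s\mathrm{sgn}(\sigma_s)\prod_{i=1}^nB(\sigma_1(2i-1),\sigma_1(2i),\dots,\sigma_m(2i-1),\sigma_m(2i))$. Barvinok's hyperpfaffian of a fully antisymmetric array $M$ indexed by $\{1,\dots,2mn\}^{2m}$: with $\mathfrak{E}_{2mn,2m}=\{\sigma\in\mathfrak{S}_{2mn}:\sigma(2m(i-1)+1)<\sigma(2m(i-1)+2)<\cdots<\sigma(2mi),\ 1\le i\le n\}$, $$\mathrm{BPf}^{[2m]}(M):=\frac{1}{n!}\sum_{\sigma\in\mathfrak{E}_{2mn,2m}}\mathrm{sgn}(\sigma)\prod_{i=1}^nM(\sigma(2m(i-1)+1),\dots,\sigma(2mi)).$$ *)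

(* Defs.v *)
From HB Require Import structures.
From mathcomp Require Import all_boot all_order all_algebra all_fingroup.
From mathcomp Require Import zify.
Set Implicit Arguments. Unset Strict Implicit. Unset Printing Implicit Defensive.
Import GRing.Theory.

(* All indices are 0-based: the paper's index 1..N becomes 'I_N = {0..N-1}. *)

Lemma idx_proof (a b : nat) (i : 'I_b) (j : 'I_a) : a * i + j < a * b.
Proof. case: i j => i Hi [j Hj] /=. nia. Qed.

(* idx a b i j = a*i + j : the j-th position of the i-th block of length a *)
Definition idx (a b : nat) (i : 'I_b) (j : 'I_a) : 'I_(a * b) :=
  Ordinal (idx_proof i j).

Lemma divord_proof (a b : nat) (k : 'I_(a * b)) : k %/ a < b.
Proof.
case: k => k Hk /=; case: a Hk => [|a] Hk; first by rewrite mul0n in Hk.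
by rewrite ltn_divLR // mulnC.
Qed.

Lemma modord_proof (a b : nat) (k : 'I_(a * b)) : k %% a < a.
Proof.
case: k => k Hk /=; case: a Hk => [|a] Hk; first by rewrite mul0n in Hk.
by rewrite ltn_mod.
Qed.

Definition divord (a b : nat) (k : 'I_(a * b)) : 'I_b := Ordinal (divord_proof k).
Definition modord (a b : nat) (k : 'I_(a * b)) : 'I_a := Ordinal (modord_proof k).

Definition blockInc (k n : nat) (s : {perm 'I_(k * n)}) : bool :=
  [forall i : 'I_n, forall j1 : 'I_k, forall j2 : 'I_k,
     (j1 < j2) ==> (s (idx i j1) < s (idx i j2))].

Definition psgn (R : ringType) (T : finType) (s : {perm T}) : R := (-1) ^+ odd_perm s.

Definition Pf2m (R : fieldType) (m n : nat)
    (B : {ffun 'I_(2 * m) -> 'I_(2 * n)} -> R) : R :=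
  (n`!%:R)^-1 *
  \sum_(sig : {ffun 'I_m -> {perm 'I_(2 * n)}} | [forall s, blockInc (sig s)])
    ((\prod_(s < m) psgn R (sig s)) *
     \prod_(i < n) B [ffun k : 'I_(2 * m) =>
                        sig (divord k) (idx i (modord k))]).

Definition BPf2m (R : fieldType) (m n : nat)
    (M : {ffun 'I_(2 * m) -> 'I_((2 * m) * n)} -> R) : R :=
  (n`!%:R)^-1 *
  \sum_(sig : {perm 'I_((2 * m) * n)} | blockInc sig)
    (psgn R sig * \prod_(i < n) M [ffun j : 'I_(2 * m) => sig (idx i j)]).

(* Main.v *)
Require Import Defs.
From HB Require Import structures.
From mathcomp Require Import all_boot all_order all_algebra all_fingroup.
From mathcomp Require Import zify.
From Stdlib Require Import Classical.
Import GRing.Theory.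
Set Implicit Arguments. Unset Strict Implicit.

Section Lift.
Local Open Scope group_scope.
Variables (T U : finType) (e : T -> U) (e_inj : injective e).

Definition liftf (p : {perm T}) (u : U) : U :=
  if [pick x | e x == u] is Some x then e (p x) else u.

Lemma liftf_e p x : liftf p (e x) = e (p x).
Proof.
rewrite /liftf; case: pickP => [y /eqP /e_inj -> //|/(_ x)]; by rewrite eqxx.
Qed.

Lemma liftf_out p u : (forall x, e x != u) -> liftf p u = u.
Proof.
move=> H; rewrite /liftf; case: pickP => [y|//]; by rewrite (negbTE (H y)).
Qed.

Lemma liftf_inj p : injective (liftf p).
Proof.
move=> u v; rewrite /liftf.
case: pickP => [x /eqP <-|Hu]; case: pickP => [y /eqP <-|Hv].
- by move/e_inj/perm_inj->.
- by move=> E; move: (Hv (p x)); rewrite E eqxx.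
- by move=> E; move: (Hu (p y)); rewrite -E eqxx.
- by [].
Qed.

Definition liftp (p : {perm T}) : {perm U} := perm (@liftf_inj p).

Lemma liftpE p u : liftp p u = liftf p u.
Proof. by rewrite permE. Qed.

Lemma liftp_e p x : liftp p (e x) = e (p x).
Proof. by rewrite liftpE liftf_e. Qed.

Lemma liftp_out p u : (forall x, e x != u) -> liftp p u = u.
Proof. by move=> H; rewrite liftpE liftf_out. Qed.

Lemma liftpM p q : liftp (p * q) = liftp p * liftp q.
Proof.
apply/permP => u; rewrite permM.
case: (pickP (fun x => e x == u)) => [x /eqP <-|H].
  by rewrite !liftp_e permM.
have H' : forall x, e x != u by move=> x; rewrite H.
by rewrite !liftp_out.
Qed.

Lemma liftp_tperm x y : liftp (tperm x y) = tperm (e x) (e y).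
Proof.
apply/permP => u.
case: (pickP (fun z => e z == u)) => [z /eqP <-|H].
  rewrite liftp_e; case: (tpermP x y z) => [->|->|/eqP zx /eqP zy].
  - by rewrite tpermL.
  - by rewrite tpermR.
  - rewrite tpermD //; apply/negP => /eqP/e_inj E.
    + by move: zx; rewrite E eqxx.
    + by move: zy; rewrite E eqxx.
have H' : forall x, e x != u by move=> z; rewrite H.
by rewrite liftp_out // tpermD // eq_sym.
Qed.

Lemma liftp1 : liftp 1 = 1.
Proof. by apply: (mulgI (liftp 1)); rewrite -liftpM !mulg1. Qed.

Lemma odd_liftp p : odd_perm (liftp p) = odd_perm p.
Proof.
case: (prod_tpermP p) => ts -> dts.
rewrite odd_perm_prod //.
have -> : liftp (\prod_(t <- ts) tperm t.1 t.2) =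
          \prod_(t <- [seq (e t.1, e t.2) | t <- ts]) tperm t.1 t.2.
  elim: ts {dts} => [|t ts IH]; first by rewrite !big_nil liftp1.
  by rewrite /= !big_cons liftpM liftp_tperm IH.
rewrite odd_perm_prod ?size_map //.
rewrite all_map; apply: sub_all dts => t /=.
by apply: contra => /eqP /e_inj ->.
Qed.
End Lift.

Section PE.
Local Open Scope group_scope.
Lemma prod_perm_eval (I : eqType) (U : finType) (seg : U -> I) (F : I -> {perm U})
  (HF1 : forall i x, seg x != i -> F i x = x)
  (HF2 : forall i x, seg (F i x) = seg x) (r : seq I) (x : U) :
  uniq r -> (\prod_(i <- r) F i) x = if seg x \in r then F (seg x) x else x.
Proof.
elim: r x => [|a r IH] x /=; first by rewrite big_nil perm1.
case/andP=> ar ur; rewrite big_cons permM in_cons.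
case: (eqVneq (seg x) a) => [E|N] /=.
  by rewrite IH // HF2 E (negbTE ar).
by rewrite HF1 // IH.
Qed.
End PE.

Set Implicit Arguments. Unset Strict Implicit.

Lemma idx_divmod a b (k : 'I_(a * b)) : idx (divord k) (modord k) = k.
Proof. apply: val_inj => /=; by rewrite mulnC -divn_eq. Qed.

Lemma divord_idx a b (i : 'I_b) (j : 'I_a) : divord (idx i j) = i.
Proof.
apply: val_inj => /=; have ja := ltn_ord j.
by rewrite mulnC divnMDl ?divn_small ?addn0 //; lia.
Qed.

Lemma modord_idx a b (i : 'I_b) (j : 'I_a) : modord (idx i j) = j.
Proof. apply: val_inj => /=; by rewrite mulnC modnMDl modn_small. Qed.

Lemma val_idx a b (i : 'I_b) (j : 'I_a) : val (idx i j) = a * i + j.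
Proof. by []. Qed.

Section Concrete.
Variables (m n : nat) (hm : 0 < m) (hn : 0 < n).

Lemma eseg_proof (s : 'I_m) (x : 'I_(2 * n)) : 2 * n * s + x < 2 * m * n.
Proof. have := ltn_ord s; have := ltn_ord x; nia. Qed.
Definition eseg (s : 'I_m) (x : 'I_(2 * n)) : 'I_(2 * m * n) := Ordinal (eseg_proof s x).

Lemma eseg_inj s : injective (eseg s).
Proof. move=> x y /(congr1 val) /= E; apply: val_inj => /=; lia. Qed.

Lemma seg_proof (k : 'I_(2 * m * n)) : k %/ (2 * n) < m.
Proof. have := ltn_ord k; rewrite ltn_divLR ?muln_gt0 //; lia. Qed.
Definition seg (k : 'I_(2 * m * n)) : 'I_m := Ordinal (seg_proof k).

Lemma seg_eseg s x : seg (eseg s x) = s.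
Proof.
apply: val_inj => /=; have xa := ltn_ord x.
by rewrite mulnC divnMDl ?muln_gt0 // divn_small ?addn0.
Qed.

Lemma epar_proof (b : 'I_2) (p : 'I_(m * n)) : 2 * p + b < 2 * m * n.
Proof. have := ltn_ord p; have := ltn_ord b; nia. Qed.
Definition epar (b : 'I_2) (p : 'I_(m * n)) : 'I_(2 * m * n) := Ordinal (epar_proof b p).

Lemma epar_inj b : injective (epar b).
Proof. move=> x y /(congr1 val) /= E; apply: val_inj => /=; lia. Qed.

Lemma rho_proof (p : 'I_(m * n)) : n * (p %% m) + p %/ m < m * n.
Proof.
have h1 : p %% m < m by rewrite ltn_mod.
have h2 : p %/ m < n by rewrite ltn_divLR //; have := ltn_ord p; nia.
nia.
Qed.
Definition rhof (p : 'I_(m * n)) : 'I_(m * n) := Ordinal (rho_proof p).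

Lemma rho_inj : injective rhof.
Proof.
move=> p q /(congr1 val) /= E.
have h2 : p %/ m < n by rewrite ltn_divLR //; have := ltn_ord p; nia.
have h3 : q %/ m < n by rewrite ltn_divLR //; have := ltn_ord q; nia.
have E1 : p %/ m = q %/ m.
  have := congr1 (modn^~ n) E; by rewrite /= ![n * _]mulnC !modnMDl !modn_small.
rewrite E1 in E; move/addIn: E => /eqP; rewrite eqn_pmul2l // => /eqP E2.
apply: val_inj; by rewrite /= (divn_eq p m) (divn_eq q m) E1 E2.
Qed.
Definition rho : {perm 'I_(m * n)} := perm rho_inj.

Definition tau : {perm 'I_(2 * m * n)} :=
  (liftp (@epar_inj ord0) rho * liftp (@epar_inj ord_max) rho)%g.

Definition Phi (sig : {ffun 'I_m -> {perm 'I_(2 * n)}}) : {perm 'I_(2 * m * n)} :=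
  (tau * \prod_(s < m) liftp (@eseg_inj s) (sig s))%g.

Lemma epar_neq (x y : 'I_(m * n)) : epar ord0 x != epar ord_max y.
Proof. apply/negP => /eqP /(congr1 val) /=; lia. Qed.

Lemma tau_val (i : 'I_n) (s : 'I_m) (b : 'I_2) :
  tau (idx i (idx s b)) = eseg s (idx i b).
Proof.
have Hp : m * i + s < m * n.
  have := ltn_ord s; have := ltn_ord i; nia.
have Hk : idx i (idx s b) = epar b (Ordinal Hp) by apply: val_inj => /=; lia.
have Hr : rho (Ordinal Hp) = rhof (Ordinal Hp) by rewrite permE.
have Hv : val (rhof (Ordinal Hp)) = n * s + i.
  rewrite /= [m * _]mulnC modnMDl modn_small // divnMDl // divn_small ?addn0 //.
rewrite Hk /tau permM.
case: b Hk => [[|[|b]] Hb] Hk //.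
- have -> : Ordinal Hb = ord0 by apply: val_inj.
  rewrite liftp_e liftp_out; last by move=> x; apply/negP => /eqP/(congr1 val)/=; lia.
  apply: val_inj; rewrite /= Hr Hv /=; lia.
- have -> : Ordinal Hb = ord_max by apply: val_inj.
  rewrite [liftp (@epar_inj ord0) _ _]liftp_out; last by move=> x; apply/negP => /eqP/(congr1 val)/=; lia.
  rewrite liftp_e; apply: val_inj; rewrite /= Hr Hv /=; lia.
Qed.


Lemma Phi_val sig (i : 'I_n) (s : 'I_m) (b : 'I_2) :
  nat_of_ord (Phi sig (idx i (idx s b))) = 2 * n * s + sig s (idx i b).
Proof.
rewrite /Phi permM tau_val.
rewrite (@prod_perm_eval _ _ seg (fun s => liftp (@eseg_inj s) (sig s))).
- by rewrite seg_eseg mem_index_enum liftp_e.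
- move=> s' x N; rewrite liftp_out // => y; apply: contra N => /eqP <-.
  by rewrite seg_eseg.
- move=> s' x.
  case: (pickP (fun y => eseg s' y == x)) => [y /eqP <-|H].
    by rewrite liftp_e !seg_eseg.
  by rewrite liftp_out // => y; rewrite H.
- exact: index_enum_uniq.
Qed.

End Concrete.

Unset Implicit Arguments. Set Strict Implicit.
Section P3.
Local Open Scope ring_scope.

Lemma psgnM (R : ringType) (T : finType) (s t : {perm T}) :
  psgn R (s * t)%g = psgn R s * psgn R t.
Proof. by rewrite /psgn odd_permM signr_addb. Qed.

Lemma psgn1 (R : ringType) (T : finType) : psgn R (1 : {perm T})%g = 1.
Proof. by rewrite /psgn odd_perm1. Qed.

Section C2.
Variables (m n : nat) (hm : (0 < m)%N) (hn : (0 < n)%N).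

Lemma psgn_Phi (R : ringType) sig :
  psgn R (Phi hm hn sig) = \prod_(s < m) psgn R (sig s).
Proof.
rewrite /Phi psgnM /tau psgnM.
rewrite /psgn !odd_liftp -signr_addb addbb expr0 mul1r.
rewrite -/(psgn R _).
rewrite (big_morph (@psgn R _) (@psgnM R _) (@psgn1 R _)).
by apply: eq_bigr => s _; rewrite /psgn odd_liftp.
Qed.

Lemma Phi_inj : injective (Phi hm hn).
Proof.
move=> s1 s2 E; apply/ffunP => s; apply/permP => x.
rewrite -(idx_divmod x); apply: ord_inj.
have H1 := Phi_val hm hn s1 (divord x) s (modord x).
have H2 := Phi_val hm hn s2 (divord x) s (modord x).
rewrite E in H1; rewrite H1 in H2; by move/eqP: H2; rewrite eqn_add2l => /eqP.
Qed.

Lemma Phi_blockInc (sig : {ffun 'I_m -> {perm 'I_(2 * n)}}) : [forall s, blockInc (sig s)] -> blockInc (Phi hm hn sig).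
Proof.
move=> /forallP H; apply/forallP => i; apply/forallP => j1; apply/forallP => j2.
apply/implyP => lt12.
rewrite -(idx_divmod j1) -(idx_divmod j2) !Phi_val.
set s1 := divord j1; set s2 := divord j2; set b1 := modord j1; set b2 := modord j2.
have e1 : (nat_of_ord j1 = 2 * s1 + b1)%N by rewrite -{1}(idx_divmod j1).
have e2 : (nat_of_ord j2 = 2 * s2 + b2)%N by rewrite -{1}(idx_divmod j2).
have hb1 := ltn_ord b1; have hb2 := ltn_ord b2.
have hx1 := ltn_ord (sig s1 (idx i b1)); have hx2 := ltn_ord (sig s2 (idx i b2)).
case: (ltngtP s1 s2) => [lt|gt|eq].
- nia.
- exfalso; nia.
- have eqs : s1 = s2 by apply: val_inj.
  rewrite -eqs in hx2 *.
  have Hb : (nat_of_ord b1 < nat_of_ord b2)%N by lia.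
  move: (H s1) => /forallP/(_ i)/forallP/(_ b1)/forallP/(_ b2)/implyP/(_ Hb).
  lia.
Qed.

End C2.
End P3.


Section C3.
Variables (m n : nat) (hm : (0 < m)%N) (hn : (0 < n)%N).

Lemma Phi_surj (sg : {perm 'I_(2 * m * n)}) : blockInc sg ->
  (forall i : 'I_n, exists r : {ffun 'I_(2 * m) -> 'I_(2 * n)},
     forall (s : 'I_m) (b : 'I_2),
       nat_of_ord (sg (idx i (idx s b))) = 2 * n * s + r (idx s b)) ->
  exists2 sig : {ffun 'I_m -> {perm 'I_(2 * n)}}, [forall s, blockInc (sig s)] & sg = Phi hm hn sig.
Proof.
move=> Hb Hall.
have h2n : 0 < 2 * n by rewrite muln_gt0.
have H : forall i s b, nat_of_ord (sg (idx i (idx s b))) =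
                       2 * n * s + sg (idx i (idx s b)) %% (2 * n).
  move=> i s b; case: (Hall i) => r Hr; rewrite Hr [2 * n * s]mulnC modnMDl.
  by rewrite modn_small.
pose f s (x : 'I_(2 * n)) : 'I_(2 * n) :=
  Ordinal (ltn_pmod (sg (idx (divord x) (idx s (modord x)))) h2n).
have finj : forall s, injective (f s).
  move=> s x y /(congr1 val) /= E.
  have Hx := H (divord x) s (modord x); have Hy := H (divord y) s (modord y).
  have : sg (idx (divord x) (idx s (modord x))) = sg (idx (divord y) (idx s (modord y))).
    by apply: ord_inj; rewrite Hx Hy E.
  move/perm_inj => E2.
  have Ed := congr1 (@divord _ _) E2; rewrite !divord_idx in Ed.
  have Em := congr1 (@modord _ _) E2; rewrite !modord_idx in Em.
  have Em2 := congr1 (@modord _ _) Em; rewrite !modord_idx in Em2.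
  by rewrite -(idx_divmod x) -(idx_divmod y) Ed Em2.
pose sig := [ffun s => perm (finj s)].
exists sig.
- apply/forallP => s; apply/forallP => i; apply/forallP => j1; apply/forallP => j2.
  apply/implyP => lt.
  rewrite !ffunE !permE /= !divord_idx !modord_idx.
  have Hlt : nat_of_ord (idx s j1) < nat_of_ord (idx s j2) by rewrite /=; lia.
  move: Hb => /forallP/(_ i)/forallP/(_ (idx s j1))/forallP/(_ (idx s j2))/implyP/(_ Hlt).
  have := H i s j1; have := H i s j2; lia.
- apply/permP => k.
  rewrite -(idx_divmod k) -(idx_divmod (modord k)).
  apply: ord_inj; rewrite Phi_val ffunE permE /= !divord_idx !modord_idx.
  exact: H.
Qed.

End C3.

Local Open Scope ring_scope.

Theorem proposition6p1 (R : fieldType) (m n : nat) (hm : (0 < m)%N) (hn : (0 < n)%N)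
  (B : {ffun 'I_(2 * m) -> 'I_(2 * n)} -> R)
  (M : {ffun 'I_(2 * m) -> 'I_((2 * m) * n)} -> R)
  (* B changes sign when i_{2s-1} and i_{2s} are interchanged *)
  (hB : forall (f : {ffun 'I_(2 * m) -> 'I_(2 * n)}) (s : 'I_m),
     B [ffun k => f (tperm (idx s ord0) (idx s ord_max) k)] = - B f)
  (* M is fully antisymmetric *)
  (hManti : forall (g : {ffun 'I_(2 * m) -> 'I_((2 * m) * n)}) (tau : {perm 'I_(2 * m)}),
     M [ffun k => g (tau k)] = psgn R tau * M g)
  (* values of M on strictly increasing index tuples *)
  (hMval : forall g : {ffun 'I_(2 * m) -> 'I_((2 * m) * n)},
     (forall k l : 'I_(2 * m), (k < l)%N -> (g k < g l)%N) ->
     (forall r : {ffun 'I_(2 * m) -> 'I_(2 * n)},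
        (forall s : 'I_m, forall b : 'I_2,
           nat_of_ord (g (idx s b)) = (2 * n * s + r (idx s b))%N) ->
        M g = B r) /\
     ((~ exists r : {ffun 'I_(2 * m) -> 'I_(2 * n)},
        forall s : 'I_m, forall b : 'I_2,
           nat_of_ord (g (idx s b)) = (2 * n * s + r (idx s b))%N) ->
      M g = 0)) :
  Pf2m B = BPf2m M.
Proof.
rewrite /Pf2m /BPf2m; congr (_ * _).
pose A := [set sig : {ffun 'I_m -> {perm 'I_(2 * n)}} | [forall s, blockInc (sig s)]].
have incr : forall (sg : {perm 'I_(2 * m * n)}) (i : 'I_n), blockInc sg ->
    forall k l : 'I_(2 * m), (k < l)%N ->
    ([ffun j : 'I_(2 * m) => sg (idx i j)] k < [ffun j : 'I_(2 * m) => sg (idx i j)] l)%N.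
  move=> sg i Hb k l kl; rewrite !ffunE.
  by move: Hb => /forallP/(_ i)/forallP/(_ k)/forallP/(_ l)/implyP/(_ kl).
rewrite (bigID (fun sg => sg \in Phi hm hn @: A)) /=.
rewrite [X in _ + X]big1 ?addr0; last first.
  move=> sg /andP [Hb Hn].
  case: (classic (forall i : 'I_n, exists r : {ffun 'I_(2 * m) -> 'I_(2 * n)},
     forall (s : 'I_m) (b : 'I_2),
       nat_of_ord (sg (idx i (idx s b))) = (2 * n * s + r (idx s b))%N)) => [Hall|Hnot].
    have [sig Hs E] := @Phi_surj m n hm hn sg Hb Hall.
    by move: Hn; rewrite E imset_f // inE.
  have [i Hi] := not_all_ex_not _ _ Hnot.
  rewrite (bigD1 i) //= (proj2 (hMval _ (incr sg i Hb))) ?mul0r ?mulr0 //.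
  move=> [r Hr]; apply: Hi; exists r => s b; rewrite -Hr ffunE //.
rewrite (eq_bigl (fun sg => sg \in Phi hm hn @: A)); last first.
  move=> sg; apply: andb_idl => /imsetP [sig Hs ->]; apply: Phi_blockInc.
  by rewrite inE in Hs.
rewrite big_imset /=; last by move=> x y _ _; apply: Phi_inj.
apply: eq_big => [sig|sig Hs]; first by rewrite inE.
rewrite psgn_Phi; congr (_ * _); apply: eq_bigr => i _.
have Hb : blockInc (Phi hm hn sig) by apply: Phi_blockInc; move: Hs; rewrite ?inE.
symmetry; apply: (proj1 (hMval _ (incr _ i Hb))) => s b.
by rewrite !ffunE Phi_val divord_idx modord_idx.
Qed.
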